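(* For every $p>0$ there exists $C_p>0$ such that for every $x\in\mathbb Z_{\ge0}$ and all integers $0\le m\le k\le n$, $$\mathbf E^n_x\big[|S_k-S_m|^p\big]\le C_p\,|k-m|^{p/2}.$$
   Context: $\mathbf P^n_x$ is the uniform probability measure on the finite set of paths $(s_0,\dots,s_n)\in\mathbb Z_{\ge0}^{n+1}$ with $s_0=x$ and $|s_{i+1}-s_i|=1$ for all $i$ (simple symmetric random walk conditioned to stay non-negative up to time $n$), $S$ is its coordinate process and $\mathbf E^n_x$ the corresponding expectation. *)

(* Defs.v *)
From Stdlib Require Import Reals List Arith.
Open Scope R_scope.

(* nonnegative paths (s_0,...,s_n) in Z_{>=0}^{n+1} with s_0 = x and
   |s_{i+1} - s_i| = 1, enumerated (without repetition) as lists of nat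
   of length n+1 *)
Fixpoint paths (n x : nat) : list (list nat) :=
  match n with
  | O => (x :: nil) :: nil
  | S n' =>
      map (cons x) (paths n' (S x)) ++
      match x with
      | O => nil
      | S x' => map (cons x) (paths n' x')
      end
  end.

(* a characterization for documentation: membership = valid path *)
Fixpoint valid_path (x : nat) (s : list nat) : Prop :=
  match s with
  | nil => False
  | y :: nil => y = x
  | y :: ((z :: _) as t) => y = x /\ (z = S y \/ S z = y) /\ valid_path z t
  end.

Definition coord (s : list nat) (k : nat) : R := INR (nth k s O).

Definition Exp (n x : nat) (f : list nat -> R) : R :=
  fold_right Rplus 0 (map f (paths n x)) / INR (length (paths n x)).

(* a^p for a >= 0 and real p > 0, with the convention 0^p = 0
   (Stdlib's Rpower 0 p would give 1) *)
Definition rpow (a p : R) : R :=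
  if Req_EM_T a 0 then 0 else Rpower a p.

(* Main.v *)
Require Import Defs.
From Stdlib Require Import Reals List Arith Lra Lia.
Open Scope R_scope.

Definition L n x := length (paths n x).

Lemma L_S n x : L (S n) x = (L n (S x) + match x with O => O | S x' => L n x' end)%nat.
Proof. unfold L; cbn [paths]. rewrite length_app, length_map. destruct x; simpl; rewrite ?length_map; lia. Qed.

Lemma L_pos n x : (1 <= L n x)%nat.
Proof. revert x; induction n; intro x. unfold L; simpl; lia. rewrite L_S. specialize (IHn (S x)); lia. Qed.

Lemma L_mono n x : (L n x <= L n (S x))%nat.
Proof. revert x; induction n; intro x. unfold L; simpl; lia.
rewrite !L_S. pose proof (IHn (S x)). destruct x; [lia|]. pose proof (IHn x). lia. Qed.

Lemma L_conc n z : (z * L n (S (S z)) <= S (S z) * L n z)%nat.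
Proof. revert z; induction n; intro z. unfold L; simpl; lia.
destruct z as [|w]. lia.
rewrite !L_S. pose proof (IHn (S (S w))). pose proof (IHn w).
set (N3 := L n (S (S (S (S w))))) in *. set (N1 := L n (S (S w))) in *. set (N0 := L n w) in *.
nia. Qed.

Definition Sum (f : list nat -> R) l := fold_right Rplus 0 (map f l).

Lemma Sum_app f l1 l2 : Sum f (l1 ++ l2) = Sum f l1 + Sum f l2.
Proof. unfold Sum; induction l1; simpl; [ring|]. rewrite IHl1; ring. Qed.

Lemma Sum_map f g l : Sum f (map g l) = Sum (fun s => f (g s)) l.
Proof. unfold Sum; rewrite map_map; reflexivity. Qed.

Lemma Sum_le f g l : (forall s, In s l -> f s <= g s) -> Sum f l <= Sum g l.
Proof. unfold Sum; induction l; simpl; intros H. lra.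
pose proof (H a (or_introl eq_refl)). pose proof (IHl (fun s Hs => H s (or_intror Hs))). lra. Qed.

Lemma Sum_const c l : Sum (fun _ => c) l = c * INR (length l).
Proof. unfold Sum; induction l; simpl length; [simpl; ring|]. rewrite S_INR. simpl. rewrite IHl; ring. Qed.

Lemma Sum_scal a f l : Sum (fun s => a * f s) l = a * Sum f l.
Proof. unfold Sum; induction l; simpl; [ring|]. rewrite IHl; ring. Qed.

Lemma Sum_S f n x : Sum f (paths (S n) x) =
  Sum (fun s => f (x :: s)) (paths n (S x)) +
  match x with O => 0 | S x' => Sum (fun s => f (x :: s)) (paths n x') end.
Proof. cbn [paths]. rewrite Sum_app, Sum_map. destruct x; [unfold Sum; simpl; ring|]. rewrite Sum_map; reflexivity. Qed.

Lemma head_paths n y s : In s (paths n y) -> nth 0 s O = y.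
Proof. revert y s; induction n; intros y s H; simpl in H.
destruct H as [<-|[]]; reflexivity.
apply in_app_iff in H; destruct H as [H|H].
apply in_map_iff in H; destruct H as [t [<- _]]; reflexivity.
destruct y; [destruct H|]. apply in_map_iff in H; destruct H as [t [<- _]]; reflexivity. Qed.
Definition ch t := (exp t + exp (- t)) / 2.
Definition sh t := (exp t - exp (- t)) / 2.

Lemma ch_plus x y : ch (x + y) = ch x * ch y + sh x * sh y.
Proof. unfold ch, sh. rewrite Ropp_plus_distr, !exp_plus. field. Qed.
Lemma ch_minus x y : ch (x - y) = ch x * ch y - sh x * sh y.
Proof. unfold ch, sh. unfold Rminus. rewrite Ropp_plus_distr, Ropp_involutive, !exp_plus. field. Qed.

Lemma exp_inv_mul t : exp t * exp (- t) = 1.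
Proof. rewrite <- exp_plus. replace (t + - t) with 0 by ring. apply exp_0. Qed.

Lemma ch_pos t : 0 < ch t.
Proof. unfold ch. pose proof (exp_pos t); pose proof (exp_pos (-t)). lra. Qed.

Lemma sh_nonpos t : t <= 0 -> sh t <= 0.
Proof. intro. unfold sh. assert (exp t <= exp (-t)). destruct (Req_dec t 0). subst. rewrite Ropp_0; lra.
left; apply exp_increasing; lra. lra. Qed.

Lemma sh_nonneg t : 0 <= t -> 0 <= sh t.
Proof. intro. unfold sh. assert (exp (-t) <= exp t). destruct (Req_dec t 0). subst. rewrite Ropp_0; lra.
left; apply exp_increasing; lra. lra. Qed.

Lemma sh_le t : 0 <= t -> sh t <= 2 * t * ch t.
Proof. intro Ht. unfold sh, ch. pose proof (exp_ineq1_le (-t)). pose proof (exp_inv_mul t).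
pose proof (exp_pos t). pose proof (exp_pos (-t)).
assert (exp t - 1 <= t * exp t) by nra.
assert (1 <= exp t) by (pose proof (exp_ineq1_le t); lra).
nra. Qed.

Definition cc lam := ch lam + 2 * lam * sh lam.

Lemma one_step A B u lam : 0 <= lam -> 0 <= B -> B <= A -> (0 < u -> (A - B) * u <= A + B) ->
  A * ch (lam * (u + 1)) + B * ch (lam * (u - 1)) <= cc lam * (A + B) * ch (lam * u).
Proof. intros Hl HB HAB Hu. unfold cc.
replace (lam * (u+1)) with (lam * u + lam) by ring. replace (lam * (u-1)) with (lam * u - lam) by ring.
rewrite ch_plus, ch_minus.
pose proof (sh_nonneg lam Hl). pose proof (ch_pos (lam*u)).
assert ((A - B) * sh (lam * u) <= 2 * lam * (A + B) * ch (lam * u)).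
{ destruct (Rle_lt_dec u 0).
  - assert (lam * u <= 0) by nra.
    pose proof (sh_nonpos (lam * u) H1).
    assert (0 <= A - B) by lra.
    assert ((A - B) * sh (lam * u) <= 0) by nra.
    assert (0 <= 2 * lam * (A + B) * ch (lam * u)) by (apply Rmult_le_pos; [nra|lra]).
    lra.
  - pose proof (sh_le (lam*u) ltac:(nra)). specialize (Hu r).
    assert ((A-B) * sh (lam*u) <= (A-B) * (2*(lam*u)*ch (lam*u))) by nra.
    assert ((A-B)*u*(2*lam*ch (lam*u)) <= (A+B)*(2*lam*ch (lam*u))). apply Rmult_le_compat_r; [nra|lra].
    nra. }
nra. Qed.

Lemma cc_bound lam : 0 <= lam -> lam <= 1/2 -> cc lam <= 1 + 5 * lam ^ 2.
Proof. intros H0 H1. unfold cc, ch, sh.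
pose proof (exp_ineq1_le (-lam)). pose proof (exp_ineq1_le lam). pose proof (exp_inv_mul lam).
pose proof (exp_pos lam). pose proof (exp_pos (-lam)).
set (e := exp lam) in *. set (e' := exp (-lam)) in *.
assert (E1: e <= 1 + lam + 2 * lam^2).
{ assert (e * (1 - lam) <= 1) by nra.
  assert (1 <= (1-lam) * (1 + lam + 2*lam^2)) by nra. nra. }
assert (E2: e' <= 1 - lam + lam^2).
{ assert (e' * (1 + lam) <= 1) by nra. nra. }
nra. Qed.

Lemma cc_pos lam : 0 <= lam -> 0 < cc lam.
Proof. intro. unfold cc. pose proof (ch_pos lam). pose proof (sh_nonneg lam H). nra. Qed.

Lemma core lam (Hl : 0 <= lam) d : forall n y r, (d <= n)%nat ->
  Sum (fun s => ch (lam * (coord s d - INR r))) (paths n y)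
  <= cc lam ^ d * INR (L n y) * ch (lam * (INR y - INR r)).
Proof.
induction d as [|d IHd]; intros n y r Hd.
- eapply Rle_trans. apply (Sum_le _ (fun _ => ch (lam * (INR y - INR r)))).
  intros s Hs. unfold coord. rewrite (head_paths _ _ _ Hs). lra.
  rewrite Sum_const. unfold L. simpl. lra.
- destruct n as [|n0]; [lia|]. rewrite Sum_S.
  pose proof (cc_pos lam Hl) as Hc. pose proof (pow_lt _ d Hc) as Hcd.
  destruct y as [|y'].
  + eapply Rle_trans. apply Rplus_le_compat_r. apply (IHd n0 1%nat r); lia.
    rewrite L_S. rewrite plus_INR. simpl (INR 0).
    pose proof (one_step (INR (L n0 1)) 0 (0 - INR r) lam Hl (Rle_refl 0) (pos_INR _)) as Hos.
    assert (Hq : 0 < 0 - INR r -> (INR (L n0 1) - 0) * (0 - INR r) <= INR (L n0 1) + 0).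
    { pose proof (pos_INR r). lra. }
    specialize (Hos Hq). replace (INR 1 - INR r) with (0 - INR r + 1) by (simpl; ring).
    simpl (cc lam ^ S d).
    assert (cc lam ^ d * (INR (L n0 1) * ch (lam * (0 - INR r + 1)) + 0 * ch (lam * (0 - INR r - 1)))
      <= cc lam ^ d * (cc lam * (INR (L n0 1) + 0) * ch (lam * (0 - INR r)))) by (apply Rmult_le_compat_l; lra).
    nra.
  + eapply Rle_trans. apply Rplus_le_compat. apply (IHd n0 (S (S y')) r); lia. apply (IHd n0 y' r); lia.
    rewrite (L_S n0 (S y')), plus_INR.
    set (A := INR (L n0 (S (S y')))). set (B := INR (L n0 y')).
    pose proof (L_mono n0 y'). pose proof (L_mono n0 (S y')). pose proof (L_conc n0 y').
    assert (HAB : B <= A). { unfold A, B. apply le_INR. lia. }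
    assert (HC : INR y' * A <= (INR y' + 2) * B).
    { unfold A, B. replace (INR y' + 2) with (INR (S (S y'))) by (rewrite !S_INR; ring).
      rewrite <- !mult_INR. apply le_INR. lia. }
    assert (HB : 0 <= B) by apply pos_INR.
    set (u := INR (S y') - INR r).
    assert (Hu : 0 < u -> (A - B) * u <= A + B).
    { intro. assert (u <= INR y' + 1) by (unfold u; rewrite S_INR; pose proof (pos_INR r); lra).
      pose proof (pos_INR y'). nra. }
    pose proof (one_step A B u lam Hl HB HAB Hu) as Hos2.
    replace (INR (S (S y')) - INR r) with (u + 1) by (unfold u; rewrite !S_INR; ring).
    replace (INR y' - INR r) with (u - 1) by (unfold u; rewrite !S_INR; ring).
    simpl (cc lam ^ S d).
    assert (cc lam ^ d * (A * ch (lam * (u + 1)) + B * ch (lam * (u - 1)))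
      <= cc lam ^ d * (cc lam * (A + B) * ch (lam * u))) by (apply Rmult_le_compat_l; lra).
    nra.
Qed.

Lemma markov m : forall n x (g : list nat -> R) K, (m <= n)%nat ->
  (forall z, Sum g (paths (n - m) z) <= K * INR (L (n - m) z)) ->
  Sum (fun s => g (skipn m s)) (paths n x) <= K * INR (L n x).
Proof.
induction m as [|m IH]; intros n x g K Hmn H.
- rewrite Nat.sub_0_r in H. apply H.
- destruct n as [|n0]; [lia|]. rewrite Sum_S. simpl (S n0 - S m)%nat in H.
  rewrite L_S, plus_INR.
  destruct x as [|x'].
  + simpl. pose proof (IH n0 1%nat g K ltac:(lia) H). simpl in H0. lra.
  + pose proof (IH n0 (S (S x')) g K ltac:(lia) H). pose proof (IH n0 x' g K ltac:(lia) H).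
    simpl skipn. lra.
Qed.

Lemma exp_le' x y : x <= y -> exp x <= exp y.
Proof. intro H. destruct (Rle_lt_or_eq_dec _ _ H) as [H1|H1]. left; apply exp_increasing; auto. subst; lra. Qed.

Lemma exp_pow x d : exp x ^ d = exp (INR d * x).
Proof. induction d. simpl. rewrite Rmult_0_l, exp_0; auto.
rewrite S_INR. simpl. rewrite IHd, <- exp_plus. f_equal; ring. Qed.

Definition lamd (d : nat) := exp (- (ln 2 + ln (INR d) / 2)).

Lemma lnd_nonneg d : (1 <= d)%nat -> 0 <= ln (INR d).
Proof. intro. destruct (Nat.eq_dec d 1). subst. rewrite INR_1, ln_1; lra.
left. rewrite <- ln_1. apply ln_increasing. lra. apply lt_1_INR; lia. Qed.

Lemma lamd_props d : (1 <= d)%nat -> 0 < lamd d /\ lamd d <= 1/2 /\ INR d * lamd d ^ 2 = 1/4.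
Proof. intro Hd. pose proof (lnd_nonneg d Hd). assert (0 < INR d) by (apply lt_0_INR; lia).
unfold lamd. split. apply exp_pos. split.
- replace (- (ln 2 + ln (INR d) / 2)) with (- ln 2 + - (ln (INR d)/2)) by ring.
  rewrite exp_plus, exp_Ropp, exp_ln by lra.
  assert (exp (- (ln (INR d) / 2)) <= 1). rewrite <- exp_0. apply exp_le'. lra.
  pose proof (exp_pos (- (ln (INR d) / 2))). nra.
- rewrite exp_pow. replace (INR 2 * - (ln 2 + ln (INR d) / 2)) with (- (ln 2 + ln 2 + ln (INR d))) by (simpl; field).
  rewrite exp_Ropp, !exp_plus, !exp_ln by lra. field. lra.
Qed.

Lemma ptw p d u : 0 < p -> (1 <= d)%nat ->
  rpow (Rabs u) p <= exp (p * ln 2 + p * ln p) * Rpower (INR d) (p / 2) * (2 * ch (lamd d * u)).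
Proof. intros Hp Hd. destruct (lamd_props d Hd) as [Hl0 [Hl1 Hl2]].
assert (Hdp : 0 < INR d) by (apply lt_0_INR; lia).
pose proof (ch_pos (lamd d * u)). pose proof (exp_pos (p * ln 2 + p * ln p)).
assert (0 < Rpower (INR d) (p/2)) by (unfold Rpower; apply exp_pos).
unfold rpow. destruct (Req_EM_T (Rabs u) 0). { apply Rmult_le_pos; nra. }
set (t := Rabs u) in *. assert (Ht : 0 < t) by (pose proof (Rabs_pos u); unfold t in *; lra).
assert (E1 : exp (lamd d * t) <= 2 * ch (lamd d * u)).
{ unfold ch, t. pose proof (exp_pos (lamd d * u)). pose proof (exp_pos (- (lamd d * u))).
  destruct (Rcase_abs u). rewrite Rabs_left by lra. replace (lamd d * - u) with (- (lamd d * u)) by ring. lra.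
  rewrite Rabs_right by lra. lra. }
assert (E2 : p * ln t <= p * ln 2 + p * ln p + p / 2 * ln (INR d) + lamd d * t).
{ set (x := lamd d * t / p). assert (0 < x) by (unfold x; apply Rdiv_lt_0_compat; nra).
  pose proof (exp_ineq1_le (ln x)). rewrite exp_ln in H3 by lra.
  assert (ln x = - (ln 2 + ln (INR d) / 2) + ln t - ln p).
  { unfold x, Rdiv. rewrite !ln_mult; try (apply Rinv_0_lt_compat); try nra.
    rewrite ln_Rinv by lra. unfold lamd. rewrite ln_exp. lra. }
  assert (p * x = lamd d * t) by (unfold x; field; lra). nra. }
unfold Rpower.
eapply Rle_trans. apply exp_le'. apply E2.
rewrite !exp_plus. replace (exp (p * ln 2) * exp (p * ln p)) with (exp (p * ln 2 + p * ln p)) by (rewrite exp_plus; auto).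
pose proof (exp_pos (p / 2 * ln (INR d))). 
assert (exp (p * ln 2 + p * ln p) * exp (p / 2 * ln (INR d)) * exp (lamd d * t) <=
        exp (p * ln 2 + p * ln p) * exp (p / 2 * ln (INR d)) * (2 * ch (lamd d * u))).
{ apply Rmult_le_compat_l; [nra|lra]. }
replace (Rpower (INR d) (p/2)) with (exp (p / 2 * ln (INR d))) in * by reflexivity. lra.
Qed.

Theorem corollaryA10 :
  forall p : R, 0 < p ->
  exists Cp : R, 0 < Cp /\
    forall (x m k n : nat), (m <= k)%nat -> (k <= n)%nat ->
      Exp n x (fun s => rpow (Rabs (coord s k - coord s m)) p)
        <= Cp * rpow (INR (k - m)) (p / 2).
Proof.
intros p Hp. set (M := exp (p * ln 2 + p * ln p)).
exists (M * 2 * exp 2). assert (0 < M) by apply exp_pos. pose proof (exp_pos 2).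
split. nra.
intros x m k n Hmk Hkn. unfold Exp. change (fold_right Rplus 0 (map ?f ?l)) with (Sum f l).
pose proof (L_pos n x) as HL. assert (HLr : 0 < INR (length (paths n x))) by (apply lt_0_INR; unfold L in HL; lia).
destruct (Nat.eq_dec k m) as [->|Hne].
{ rewrite Nat.sub_diag. unfold rpow at 2. simpl INR. destruct (Req_EM_T 0 0); [|lra].
  assert (Sum (fun s => rpow (Rabs (coord s m - coord s m)) p) (paths n x) <= 0).
  { eapply Rle_trans. apply (Sum_le _ (fun _ => 0)). intros s _.
    replace (coord s m - coord s m) with 0 by ring. rewrite Rabs_R0. unfold rpow.
    destruct (Req_EM_T 0 0); lra. rewrite Sum_const; lra. }
  rewrite Rmult_0_r. unfold Rdiv. assert (0 < / INR (length (paths n x))) by (apply Rinv_0_lt_compat; lra). nra. }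
set (d := (k - m)%nat). assert (Hd : (1 <= d)%nat) by (unfold d; lia).
assert (Hdp : 0 < INR d) by (apply lt_0_INR; lia).
assert (HR : rpow (INR d) (p/2) = Rpower (INR d) (p/2)).
{ unfold rpow. destruct (Req_EM_T (INR d) 0); lra. }
rewrite HR. set (Rd := Rpower (INR d) (p/2)).
assert (HRd : 0 < Rd) by (unfold Rd, Rpower; apply exp_pos).
destruct (lamd_props d Hd) as [Hl0 [Hl1 Hl2]].
set (g := fun s' : list nat => rpow (Rabs (coord s' d - coord s' 0)) p).
assert (Hmain : Sum (fun s => rpow (Rabs (coord s k - coord s m)) p) (paths n x) <= (M * 2 * exp 2 * Rd) * INR (L n x)).
{ eapply Rle_trans. apply (Sum_le _ (fun s => g (skipn m s))).
  { intros s _. unfold g, coord. rewrite !nth_skipn. replace (m + d)%nat with k by (unfold d; lia).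
    rewrite Nat.add_0_r. lra. }
  apply markov; [lia|]. intro z.
  eapply Rle_trans. apply (Sum_le _ (fun s => (M * Rd * 2) * ch (lamd d * (coord s d - INR z)))).
  { intros s Hs. unfold g. unfold coord at 2. rewrite (head_paths _ _ _ Hs).
    pose proof (ptw p d (coord s d - INR z) Hp Hd). unfold M, Rd. lra. }
  rewrite Sum_scal.
  pose proof (core (lamd d) (Rlt_le _ _ Hl0) d (n - m) z z ltac:(unfold d; lia)) as Hc.
  replace (INR z - INR z) with 0 in Hc by ring. rewrite Rmult_0_r in Hc.
  replace (ch 0) with 1 in Hc by (unfold ch; rewrite Ropp_0, exp_0; field).
  assert (Hcc : cc (lamd d) ^ d <= exp 2).
  { eapply Rle_trans. apply pow_incr. split. left; apply cc_pos; lra. eapply Rle_trans.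
    apply cc_bound; lra. pose proof (exp_ineq1_le (5 * lamd d ^ 2)). apply H1.
    rewrite exp_pow. apply exp_le'. nra. }
  pose proof (pos_INR (L (n - m) z)).
  pose proof (Rmult_le_compat_r (INR (L (n-m) z)) _ _ H1 Hcc).
  assert (0 <= M * Rd * 2) by nra.
  pose proof (Rmult_le_compat_l _ _ _ H3 Hc). nra. }
unfold L in Hmain. unfold Rdiv.
apply (Rmult_le_reg_r (INR (length (paths n x)))); [lra|].
rewrite Rmult_assoc, Rinv_l by lra. lra.
Qed.
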